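(* Let $q=p^f$ be a prime power and $N>2$ an integer with $N\mid(q-1)$; put $k=(q-1)/N$. Let $\gamma$ be a primitive element of $\mathbb{F}_q$, $C_0=\langle\gamma^N\rangle$, and let $\eta_a=\sum_{x\in\gamma^aC_0}\psi(x)$, $0\le a\le N-1$. Suppose the $\eta_a$ take exactly three distinct rational values $\alpha_1,\alpha_2,\alpha_3$, and for $i=1,2,3$ let $I_i=\{a\in\mathbb{Z}_N:\eta_a=\alpha_i\}$. Then $$|I_1|=-\frac{\alpha_2\alpha_3(q-1)+k(q-k+\alpha_2+\alpha_3)}{k(\alpha_1-\alpha_2)(\alpha_3-\alpha_1)},\quad |I_2|=-\frac{\alpha_1\alpha_3(q-1)+k(q-k+\alpha_1+\alpha_3)}{k(\alpha_1-\alpha_2)(\alpha_2-\alpha_3)},$$ $$|I_3|=-\frac{\alpha_1\alpha_2(q-1)+k(q-k+\alpha_1+\alpha_2)}{k(\alpha_2-\alpha_3)(\alpha_3-\alpha_1)}.$$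
   Context: $\psi$ is the canonical additive character of $\mathbb{F}_q$: $\psi(x)=\xi_p^{\mathrm{Tr}_{q/p}(x)}$, where $\xi_p$ is a complex primitive $p$-th root of unity and $\mathrm{Tr}_{q/p}$ is the absolute trace. *)

(* Defs.v *)
From mathcomp Require Import all_boot all_order all_algebra all_field.
Set Implicit Arguments. Unset Strict Implicit. Unset Printing Implicit Defensive.
Import GRing.Theory Num.Theory.
Local Open Scope ring_scope.

Definition abs_trace (F : finFieldType) (p f : nat) (x : F) : F :=
  \sum_(i < f) x ^+ (p ^ i)%N.

(* The trace lies in the prime field F_p; its representative in {0,..,p-1}. *)
Definition trace_nat (F : finFieldType) (p f : nat) (x : F) : nat :=
  oapp (@nat_of_ord p) 0%N [pick n : 'I_p | (n%:R : F) == abs_trace p f x].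

Definition can_add_char (F : finFieldType) (p f : nat) (xi : algC) (x : F) : algC :=
  xi ^+ trace_nat p f x.

Definition cyc_coset (F : finFieldType) (g : F) (N a : nat) : {set F} :=
  [set g ^+ a * g ^+ (N * j)%N | j : 'I_#|F|].

Definition gauss_period (F : finFieldType) (p f : nat) (xi : algC) (g : F) (N a : nat) : algC :=
  \sum_(x in cyc_coset g N a) can_add_char p f xi x.

(* Main.v *)
Require Import Defs.
From mathcomp Require Import all_boot all_order all_algebra all_field.
From mathcomp Require Import ring.
Import GRing.Theory Num.Theory.
Local Open Scope ring_scope.
Set Implicit Arguments. Unset Strict Implicit.


Lemma natF_eq (F : finFieldType) (p m n : nat) : p \in [pchar F] ->
  ((m%:R : F) == n%:R) = (m == n %[mod p]).
Proof.
move=> hc; wlog le : m n / (m <= n)%N.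
  move=> H; case: (leqP m n) => h; first exact: H.
  by rewrite eq_sym H ?(ltnW h) // eq_sym.
by rewrite eq_sym [in RHS]eq_sym eqn_mod_dvd // (dvdn_pcharf hc) natrB // subr_eq0.
Qed.

Lemma trD (F : finFieldType) (p f : nat) (x y : F) : prime p -> p \in [pchar F] ->
  abs_trace p f (x + y) = abs_trace p f x + abs_trace p f y.
Proof.
move=> pp hc; rewrite /abs_trace -big_split; apply: eq_bigr => i _.
by rewrite exprDn_pchar // pnatX (pnatE _ pp) hc.
Qed.

Lemma trP (F : finFieldType) (p f : nat) (x : F) : prime p -> p \in [pchar F] ->
  #|F| = (p ^ f)%N -> abs_trace p f x ^+ p = abs_trace p f x.
Proof.
move=> pp hc hq; rewrite /abs_trace.
rewrite -(pFrobenius_autE hc) rmorph_sum /=.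
under eq_bigr => i _ do rewrite pFrobenius_autE -exprM -expnSr.
case: f hq => [|f] hq; first by rewrite !big_ord0.
rewrite big_ord_recr big_ord_recl /= -hq expf_card expn0 expr1 addrC.
by congr (_ + _); apply: eq_bigr => i _; rewrite /bump /=.
Qed.

Lemma fix_prime (F : finFieldType) (p : nat) (z : F) : prime p -> p \in [pchar F] ->
  z ^+ p = z -> exists2 n, (n < p)%N & z = n%:R.
Proof.
move=> pp hc hz.
have p1 := prime_gt1 pp.
pose P : {poly F} := 'X^p - 'X.
have sP : size P = p.+1.
  by rewrite /P size_polyDl ?size_polyXn // size_polyN size_polyX.
have rP w : root P w = (w ^+ p == w) by rewrite rootE !hornerE subr_eq0.
have nP : P != 0 by rewrite -size_poly_eq0 sP.
pose rs := [seq (i%:R : F) | i <- iota 0 p].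
have urs : uniq rs.
  rewrite map_inj_in_uniq ?iota_uniq // => i j; rewrite !mem_iota /= => hi hj.
  move/eqP; rewrite (natF_eq _ _ hc) => /eqP; rewrite !modn_small //.
have rrs : all (root P) rs.
  apply/allP => w /mapP [i _ ->]; rewrite rP.
  by rewrite -(pFrobenius_autE hc) rmorph_nat.
case: (boolP (z \in rs)) => [/mapP [i]|zn].
  by rewrite mem_iota /= => hi ->; exists i.
have := max_poly_roots nP (rs := z :: rs).
rewrite /= rP hz eqxx rrs zn urs sP size_map size_iota ltnn => /(_ isT isT).
by [].
Qed.

Lemma tn_spec (F : finFieldType) (p f : nat) (x : F) : prime p -> p \in [pchar F] ->
  #|F| = (p ^ f)%N -> (trace_nat p f x < p)%N /\ (trace_nat p f x)%:R = abs_trace p f x.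
Proof.
move=> pp hc hq; rewrite /trace_nat; case: pickP => [n /eqP -> /=|H]; first by split.
have [m hn e] := fix_prime pp hc (trP x pp hc hq).
by move: (H (Ordinal hn)); rewrite /= -e eqxx.
Qed.

Lemma psiD (F : finFieldType) (p f : nat) (xi : algC) (x y : F) : prime p -> p \in [pchar F] ->
  #|F| = (p ^ f)%N -> p.-primitive_root xi ->
  can_add_char p f xi (x + y) = can_add_char p f xi x * can_add_char p f xi y.
Proof.
move=> pp hc hq hxi; rewrite /can_add_char -exprD; apply/eqP.
rewrite (eq_prim_root_expr hxi) -(natF_eq _ _ hc) natrD.
have [_ ->] := tn_spec (x + y) pp hc hq.
have [_ ->] := tn_spec x pp hc hq.
have [_ ->] := tn_spec y pp hc hq.
by rewrite trD.
Qed.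

Lemma psi_neq0 (F : finFieldType) (p f : nat) (xi : algC) (x : F) : 
  p.-primitive_root xi -> can_add_char p f xi x != 0.
Proof.
move=> hxi; rewrite /can_add_char expf_eq0 negb_and; apply/orP; right.
by rewrite (prim_root_eq0 hxi) -lt0n (prim_order_gt0 hxi).
Qed.

Lemma psi0 (F : finFieldType) (p f : nat) (xi : algC) : prime p -> p \in [pchar F] ->
  #|F| = (p ^ f)%N -> p.-primitive_root xi -> can_add_char p f xi (0 : F) = 1.
Proof.
move=> pp hc hq hxi; have := psiD (0%R : F) 0%R pp hc hq hxi; rewrite addr0.
move=> e; apply: (mulfI (psi_neq0 f (0%R : F) hxi)); by rewrite mulr1 -e.
Qed.

Lemma tr_nontriv (F : finFieldType) (p f : nat) : prime p -> 
  #|F| = (p ^ f)%N -> exists x : F, abs_trace p f x != 0.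
Proof.
move=> pp hq.
have p1 := prime_gt1 pp.
have f0 : (0 < f)%N.
  case: f hq => // hq; have := finNzRing_gt1 F; by rewrite hq.
suff: ~~ [forall x : F, abs_trace p f x == 0].
  by rewrite negb_forall => /existsP.
apply/negP => /forallP H.
pose T : {poly F} := \sum_(i < f) 'X^(p ^ i).
have hT x : T.[x] = abs_trace p f x.
  by rewrite /T horner_sum /abs_trace; apply: eq_bigr => i _; rewrite hornerXn.
have nT : T != 0.
  apply/eqP => /(congr1 (fun P : {poly F} => P`_(p ^ f.-1))).
  have hf : (f.-1 < f)%N by rewrite prednK.
  rewrite coef0 /T coef_sum (bigD1 (Ordinal hf)) //=.
  rewrite coefXn eqxx big1 ?addr0; first by move/eqP; exact: (negP (oner_neq0 F)).
  move=> i hi.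
  rewrite coefXn eqn_exp2l // ; case: eqP => // e; move: hi.
  by rewrite -val_eqE /= e eqxx.
have sT : (size T <= (p ^ f.-1).+1)%N.
  apply: leq_trans (size_sum _ _ _) _.
  apply/bigmax_leqP => i _; rewrite size_polyXn ltnS leq_exp2l //.
  by rewrite -ltnS prednK.
have := max_poly_roots nT (rs := enum F).
rewrite enum_uniq => /(_ _ isT).
have -> : all (root T) (enum F).
  by apply/allP => x _; rewrite rootE hT; exact: H.
move=> /(_ isT) h; have := leq_trans h sT.
by rewrite -cardE hq ltnS leq_exp2l // -ltnS prednK // ltnn.
Qed.


Lemma psi_sum0 (F : finFieldType) (p f : nat) (xi : algC) : prime p -> p \in [pchar F] ->
  #|F| = (p ^ f)%N -> p.-primitive_root xi -> \sum_(x : F) can_add_char p f xi x = 0.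
Proof.
move=> pp hc hq hxi.
have [x0 hx0] := tr_nontriv pp hq.
have n1 : can_add_char p f xi x0 != 1.
  have [lt e] := tn_spec x0 pp hc hq.
  rewrite /can_add_char -(prim_order_dvd hxi) gtnNdvd // lt0n.
  by apply: contra hx0 => /eqP h; rewrite -e h.
set S := \sum_x _.
have : S = can_add_char p f xi x0 * S.
  rewrite {1}/S (reindex_inj (addrI x0)) /S mulr_sumr; apply: eq_bigr => x _.
  by rewrite psiD.
move=> e; apply/eqP.
have : (1 - can_add_char p f xi x0) * S == 0 by rewrite mulrBl mul1r -e subrr.
by rewrite mulf_eq0 subr_eq0 eq_sym (negPf n1).
Qed.

Lemma psi_sum (F : finFieldType) (p f : nat) (xi : algC) (c : F) : prime p -> p \in [pchar F] ->
  #|F| = (p ^ f)%N -> p.-primitive_root xi -> c != 0 ->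
  \sum_(x : F | x != 0) can_add_char p f xi (c * x) = -1.
Proof.
move=> pp hc hq hxi hc0.
have := psi_sum0 pp hc hq hxi; rewrite (reindex_inj (mulfI hc0)) (bigD1 0) //=.
by rewrite mulr0 psi0 // => /eqP; rewrite addrC addr_eq0 => /eqP.
Qed.

Lemma psi_conj (F : finFieldType) (p f : nat) (xi : algC) (x : F) : prime p -> p \in [pchar F] ->
  #|F| = (p ^ f)%N -> p.-primitive_root xi ->
  can_add_char p f xi (- x) = (can_add_char p f xi x)^*.
Proof.
move=> pp hc hq hxi.
set u := can_add_char p f xi x.
have hu : u * can_add_char p f xi (- x) = 1 by rewrite /u -psiD // subrr psi0.
have nu : `|u| = 1.
  apply/eqP; rewrite -(pexpr_eq1 (prime_gt0 pp)) // -normrX.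
  by rewrite /u /can_add_char exprAC (prim_expr_order hxi) expr1n normr1.
have : u * u^* = 1 by rewrite -normCK nu expr1n.
by rewrite -hu => /(mulfI (psi_neq0 f x hxi)).
Qed.

Definition lg (F : finFieldType) (g : F) (x : F) : nat :=
  oapp (@nat_of_ord _) 0%N [pick m : 'I_#|F|.-1 | g ^+ m == x].

Lemma cardF_S (F : finFieldType) : #|F| = (#|F|.-1).+1.
Proof. by rewrite prednK // (ltn_trans _ (finNzRing_gt1 F)). Qed.

Lemma lgP (F : finFieldType) (g x : F) : (#|F|.-1).-primitive_root g -> x != 0 ->
  g ^+ lg g x = x /\ (lg g x < #|F|.-1)%N.
Proof.
move=> hg hx; rewrite /lg; case: pickP => [m /eqP /= e|H]; first by rewrite e; split.
have x1 : x ^+ #|F|.-1 = 1.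
  apply: (mulfI hx); rewrite mulr1 -exprS -cardF_S; exact: expf_card.
have [i hi] := prim_rootP hg x1.
by move: (H i); rewrite hi eqxx.
Qed.

Lemma g_neq0 (F : finFieldType) (g : F) : (#|F|.-1).-primitive_root g -> g != 0.
Proof.
move=> hg; rewrite (prim_root_eq0 hg) -lt0n.
by rewrite -ltnS -cardF_S finNzRing_gt1.
Qed.

Lemma lg_mod (F : finFieldType) (g x : F) (N m : nat) : (#|F|.-1).-primitive_root g ->
  (N %| #|F|.-1)%N -> g ^+ m = x -> (lg g x %% N = m %% N)%N.
Proof.
move=> hg hN e.
have hx : x != 0 by rewrite -e expf_neq0 // g_neq0.
have [e2 _] := lgP hg hx.
have : g ^+ lg g x == g ^+ m by rewrite e e2.
rewrite (eq_prim_root_expr hg) => /eqP h.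
by rewrite -(modn_dvdm _ hN) h modn_dvdm.
Qed.

Lemma memC (F : finFieldType) (g x : F) (N a : nat) : (#|F|.-1).-primitive_root g ->
  (N %| #|F|.-1)%N -> (a < N)%N ->
  (x \in cyc_coset g N a) = (x != 0) && (lg g x %% N == a)%N.
Proof.
move=> hg hN ha; apply/imsetP/andP => [[j _ ->]|[hx /eqP hl]].
  rewrite -exprD; split; first by rewrite expf_neq0 // g_neq0.
  by rewrite (lg_mod hg hN (erefl _)) addnC mulnC modnMDl modn_small.
have [e lt] := lgP hg hx.
have hj : (lg g x %/ N < #|F|)%N.
  apply: leq_ltn_trans (leq_div _ _) _; apply: ltn_trans lt _.
  by rewrite {2}cardF_S.
exists (Ordinal hj) => //=.
by rewrite -exprD mulnC addnC -hl -divn_eq e.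
Qed.

Lemma memCM (F : finFieldType) (g x t : F) (N a : nat) : (#|F|.-1).-primitive_root g ->
  (N %| #|F|.-1)%N -> (a < N)%N -> x \in cyc_coset g N a ->
  (x * t \in cyc_coset g N a) = (t \in cyc_coset g N 0).
Proof.
move=> hg hN ha hx; have N0 : (0 < N)%N by apply: leq_ltn_trans ha.
rewrite !memC //; move: hx; rewrite memC // => /andP [hx /eqP hl].
rewrite mulf_eq0 negb_or hx /=; case: (boolP (t == 0)) => //= ht.
have [ex _] := lgP hg hx; have [et _] := lgP hg ht.
rewrite (lg_mod (m := (lg g x + lg g t)%N) hg hN); last by rewrite exprD ex et.
have := eqn_modDl a (lg g t) 0 N; rewrite addn0 (modn_small ha) mod0n => <-.
by rewrite -modnDml hl.
Qed.

Lemma reindexC (F : finFieldType) (g x : F) (N a : nat) (G : F -> algC) :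
  (#|F|.-1).-primitive_root g -> (N %| #|F|.-1)%N -> (a < N)%N ->
  x \in cyc_coset g N a ->
  \sum_(y in cyc_coset g N a) G y = \sum_(t in cyc_coset g N 0) G (x * t).
Proof.
move=> hg hN ha hx.
have x0 : x != 0 by move: hx; rewrite memC // => /andP [].
rewrite (reindex_inj (mulfI x0)) /=; apply: eq_bigl => t.
exact: memCM.
Qed.

Lemma sumC (F : finFieldType) (g : F) (N : nat) (G : F -> algC) :
  (#|F|.-1).-primitive_root g -> (N %| #|F|.-1)%N -> (0 < N)%N ->
  \sum_(a < N) \sum_(x in cyc_coset g N a) G x = \sum_(x | x != 0) G x.
Proof.
move=> hg hN N0.
pose cls (x : F) : 'I_N := Ordinal (ltn_pmod (lg g x) N0).
rewrite (partition_big cls predT) //=; apply: eq_bigr => a _.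
apply: eq_bigl => x; rewrite memC //.
Qed.

Lemma ga_mem (F : finFieldType) (g : F) (N a : nat) : (#|F|.-1).-primitive_root g ->
  (N %| #|F|.-1)%N -> (a < N)%N -> g ^+ a \in cyc_coset g N a.
Proof.
move=> hg hN ha; rewrite memC // expf_neq0 ?g_neq0 //=.
by rewrite (lg_mod hg hN (erefl _)) modn_small.
Qed.

Lemma cardCos (F : finFieldType) (g : F) (N a : nat) : (#|F|.-1).-primitive_root g ->
  (N %| #|F|.-1)%N -> (a < N)%N -> #|cyc_coset g N a| = (#|F|.-1 %/ N)%N.
Proof.
move=> hg hN ha; have N0 : (0 < N)%N by apply: leq_ltn_trans ha.
have hc b : (b < N)%N -> #|cyc_coset g N b| = #|cyc_coset g N 0|.
  move=> hb; apply/eqP; rewrite -(eqr_nat algC) -!sumr_const.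
  by rewrite (reindexC (fun _ => 1) hg hN hb (ga_mem hg hN hb)).
have := sumC (fun _ => (1 : algC)) hg hN N0.
under eq_bigr => b _ do rewrite sumr_const (hc b (ltn_ord b)).
rewrite sumr_const card_ord sumr_const cardC1 -mulr_natr -natrM => /eqP.
rewrite eqr_nat => /eqP e.
by rewrite hc // -e mulnK.
Qed.

Lemma E1 (F : finFieldType) (p f N : nat) (xi : algC) (g : F) : prime p -> p \in [pchar F] ->
  #|F| = (p ^ f)%N -> p.-primitive_root xi -> (#|F|.-1).-primitive_root g ->
  (N %| #|F|.-1)%N -> (0 < N)%N ->
  \sum_(a < N) gauss_period p f xi g N a = -1.
Proof.
move=> pp hc hq hxi hg hN N0; rewrite /gauss_period sumC //.
rewrite -(psi_sum (c := 1) pp hc hq hxi) ?oner_neq0 //.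
by apply: eq_bigr => x _; rewrite mul1r.
Qed.

Lemma full_sum (F : finFieldType) (p f : nat) (xi : algC) (c : F) : prime p -> p \in [pchar F] ->
  #|F| = (p ^ f)%N -> p.-primitive_root xi ->
  \sum_(x : F) can_add_char p f xi (c * x) = if c == 0 then #|F|%:R else 0.
Proof.
move=> pp hc hq hxi; case: eqP => [->|/eqP c0].
  under eq_bigr => x _ do rewrite mul0r psi0 //.
  by rewrite sumr_const.
by have := psi_sum0 pp hc hq hxi; rewrite (reindex_inj (mulfI c0)).
Qed.

Lemma E2 (F : finFieldType) (p f N : nat) (xi : algC) (g : F) : prime p -> p \in [pchar F] ->
  #|F| = (p ^ f)%N -> p.-primitive_root xi -> (#|F|.-1).-primitive_root g ->
  (N %| #|F|.-1)%N -> (0 < N)%N ->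
  \sum_(a < N) gauss_period p f xi g N a * (gauss_period p f xi g N a)^* =
  #|F|%:R - (#|F|.-1 %/ N)%:R.
Proof.
move=> pp hc hq hxi hg hN N0.
set psi := can_add_char (F:=F) p f xi.
set C := cyc_coset g N.
have step a : (a < N)%N -> gauss_period p f xi g N a * (gauss_period p f xi g N a)^* =
    \sum_(x in C a) \sum_(t in C 0%N) psi (x * (1 - t)).
  move=> ha; rewrite /gauss_period rmorph_sum /= mulr_suml; apply: eq_bigr => x hx.
  rewrite mulr_sumr.
  rewrite (reindexC (fun y => psi x * (psi y)^*) hg hN ha hx).
  apply: eq_bigr => t _; rewrite -psi_conj // -psiD //.
  by rewrite mulrBr mulr1.
under eq_bigr => a _ do rewrite (step a (ltn_ord a)).
rewrite sumC // exchange_big /=.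
have h1 t : \sum_(x | x != 0) psi (x * (1 - t)) = \sum_x psi ((1 - t) * x) - 1.
  rewrite /psi [X in _ = X - _](bigD1 0) //= mulr0 psi0 // addrC addrK.
  by apply: eq_bigr => x _; rewrite mulrC.
under eq_bigr => t _ do rewrite h1 full_sum //.
rewrite sumrB sumr_const (cardCos (a:=0) hg hN N0).
have C1 : 1 \in C 0%N by rewrite -(expr0 g); apply: ga_mem.
rewrite (bigD1 1) //= subrr eqxx big1 ?addr0 // => t /andP [_ ht].
by rewrite subr_eq0 eq_sym (negPf ht).
Qed.

Lemma sum_ind (N : nat) (b : 'I_N -> bool) (c : algC) :
  \sum_(a < N) (b a)%:R * c = #|[set a | b a]|%:R * c.
Proof.
rewrite -mulr_suml; congr (_ * _).
rewrite (eq_bigr (fun a => if b a then 1 else 0)); last by move=> a _; case: (b a).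
by rewrite -big_mkcond sumr_const cardsE.
Qed.

Lemma count3 (N : nat) (e : 'I_N -> algC) (A1 A2 A3 : algC) (G : algC -> algC) :
  A1 != A2 -> A1 != A3 -> A2 != A3 -> (forall a, e a \in [:: A1; A2; A3]) ->
  \sum_(a < N) G (e a) = #|[set a | e a == A1]|%:R * G A1 +
    #|[set a | e a == A2]|%:R * G A2 + #|[set a | e a == A3]|%:R * G A3.
Proof.
move=> h12 h13 h23 hv.
rewrite -!sum_ind -!big_split /=; apply: eq_bigr => a _.
move: (hv a); rewrite !inE => /or3P [] /eqP ->.
- by rewrite eqxx (negPf h12) (negPf h13) mul1r !mul0r !addr0.
- by rewrite eqxx eq_sym (negPf h12) (negPf h23) mul1r !mul0r add0r addr0.
- by rewrite eqxx eq_sym (negPf h13) eq_sym (negPf h23) mul1r !mul0r !add0r.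
Qed.

Lemma alg (n1 n2 n3 a1 a2 a3 kk q : rat) :
  q = (n1 + n2 + n3) * kk + 1 -> n1 * a1 + n2 * a2 + n3 * a3 = -1 ->
  n1 * a1 ^+ 2 + n2 * a2 ^+ 2 + n3 * a3 ^+ 2 = q - kk ->
  n1 * (kk * (a1 - a2) * (a3 - a1)) = - (a2 * a3 * (q - 1) + kk * (q - kk + a2 + a3)).
Proof.
move=> hq h1 h2; apply/eqP; rewrite eq_sym -subr_eq0.
have -> : - (a2 * a3 * (q - 1) + kk * (q - kk + a2 + a3)) - n1 * (kk * (a1 - a2) * (a3 - a1))
   = kk * ((n1 * a1 ^+ 2 + n2 * a2 ^+ 2 + n3 * a3 ^+ 2 - (q - kk))
           - (a2 + a3) * (n1 * a1 + n2 * a2 + n3 * a3 + 1)).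
  by rewrite hq; ring.
by rewrite h2 h1 subrr addNr mulr0 subr0 mulr0.
Qed.

Lemma fin (x D D' num : rat) : D' != 0 -> x * D = num -> D = D' -> x = num / D'.
Proof. by move=> h e e'; rewrite -e e' mulfK. Qed.

Unset Implicit Arguments.
Theorem lemma2p2 (F : finFieldType) (p f N k : nat) (xi : algC) (g : F)
    (a1 a2 a3 : rat)
    (hp : prime p) (hchar : p \in [pchar F]) (hq : #|F| = (p ^ f)%N)
    (hN : (2 < N)%N) (hdiv : (N %| #|F|.-1)%N) (hk : k = (#|F|.-1 %/ N)%N)
    (hxi : p.-primitive_root xi) (hg : (#|F|.-1).-primitive_root g)
    (h12 : a1 != a2) (h13 : a1 != a3) (h23 : a2 != a3)
    (hval : forall a : 'I_N, gauss_period p f xi g N a \in [:: ratr a1; ratr a2; ratr a3])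
    (hatt1 : exists a : 'I_N, gauss_period p f xi g N a = ratr a1)
    (hatt2 : exists a : 'I_N, gauss_period p f xi g N a = ratr a2)
    (hatt3 : exists a : 'I_N, gauss_period p f xi g N a = ratr a3) :
  let q : rat := (#|F|)%:R in
  let kk : rat := k%:R in
  let I1 := [set a : 'I_N | gauss_period p f xi g N a == ratr a1] in
  let I2 := [set a : 'I_N | gauss_period p f xi g N a == ratr a2] in
  let I3 := [set a : 'I_N | gauss_period p f xi g N a == ratr a3] in
  [/\ (#|I1|)%:R = - (a2 * a3 * (q - 1) + kk * (q - kk + a2 + a3))
                    / (kk * (a1 - a2) * (a3 - a1)),
      (#|I2|)%:R = - (a1 * a3 * (q - 1) + kk * (q - kk + a1 + a3))
                    / (kk * (a1 - a2) * (a2 - a3)) &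
      (#|I3|)%:R = - (a1 * a2 * (q - 1) + kk * (q - kk + a1 + a2))
                    / (kk * (a2 - a3) * (a3 - a1))].
Proof.
move=> q kk I1 I2 I3.
have N0 : (0 < N)%N by apply: ltn_trans hN.
have rinj : injective (@ratr algC) by apply: fmorph_inj.
have d12 : (ratr a1 : algC) != ratr a2 by rewrite (inj_eq rinj).
have d13 : (ratr a1 : algC) != ratr a3 by rewrite (inj_eq rinj).
have d23 : (ratr a2 : algC) != ratr a3 by rewrite (inj_eq rinj).
have cnt := count3 _ d12 d13 d23 hval.
rewrite -/I1 -/I2 -/I3 in cnt.
set n1 := #|I1|; set n2 := #|I2|; set n3 := #|I3|.
have S0 : N = (n1 + n2 + n3)%N.
  have := cnt (fun _ => 1); rewrite sumr_const card_ord !mulr1 -!natrD.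
  by move/eqP; rewrite eqr_nat => /eqP ->.
have S1 := cnt id; rewrite /= (E1 hp hchar hq hxi hg hdiv N0) in S1.
have S2 := cnt (fun z => z * z^*).
rewrite /= (E2 hp hchar hq hxi hg hdiv N0) !(fmorph_rat Num.conj_op) in S2.
have hkN : #|F| = ((n1 + n2 + n3) * k).+1 by rewrite hk -S0 mulnC divnK // -cardF_S.
have hq' : q = (n1%:R + n2%:R + n3%:R) * kk + 1.
  by rewrite /q /kk hkN -addn1 natrD natrM !natrD.
have h1 : n1%:R * a1 + n2%:R * a2 + n3%:R * a3 = -1.
  apply: rinj; rewrite !rmorphD !rmorphM rmorphN rmorph1 !rmorph_nat /=; exact: esym S1.
have h2 : n1%:R * a1 ^+ 2 + n2%:R * a2 ^+ 2 + n3%:R * a3 ^+ 2 = q - kk.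
  apply: rinj; rewrite /q /kk !expr2 !rmorphD !rmorphM rmorphN !rmorph_nat /=.
  by rewrite -S2 -hk.
have k0 : kk != 0.
  rewrite /kk pnatr_eq0 hk -lt0n divn_gt0 // dvdn_leq // -ltnS -cardF_S.
  exact: finNzRing_gt1.
have s12 : a1 - a2 != 0 by rewrite subr_eq0.
have s13 : a3 - a1 != 0 by rewrite subr_eq0 eq_sym.
have s23 : a2 - a3 != 0 by rewrite subr_eq0.
split.
- apply: fin (alg hq' h1 h2) _; first by rewrite !mulf_neq0.
  by [].
- apply: fin (alg (n1 := n2%:R) (n2 := n1%:R) (n3 := n3%:R) (a1 := a2) (a2 := a1) (a3 := a3) _ _ _) _.
  + by rewrite !mulf_neq0.
  + by rewrite hq'; ring.
  + by rewrite -h1; ring.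
  + by rewrite -h2; ring.
  + by ring.
- apply: fin (alg (n1 := n3%:R) (n2 := n1%:R) (n3 := n2%:R) (a1 := a3) (a2 := a1) (a3 := a2) _ _ _) _.
  + by rewrite !mulf_neq0.
  + by rewrite hq'; ring.
  + by rewrite -h1; ring.
  + by rewrite -h2; ring.
  + by ring.
Qed.
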